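(* Let $(\mathbf{X},\mathbf{A})\sim \textsf{CSBM}(n,p,q,\boldsymbol{\mu},\sigma^2)$ and for an edge $(i,j)$ let $\mathbf{X}'_{ij}=\begin{pmatrix}\mathbf{X}_i\\ \mathbf{X}_j\end{pmatrix}\in\mathbb{R}^{2d}$. Consider the problem of predicting the label $y\in\{0,1\}$ of an edge $(i,j)$ ($y=1$ if intra-class, $y=0$ if inter-class) from $\mathbf{X}'_{ij}$. The Bayes optimal classifier for $\mathbf{X}'_{ij}$ is realized by $$h^*(\boldsymbol{x})=\begin{cases}0,& \text{if } p\cosh\!\left(\frac{\boldsymbol{x}^T\boldsymbol{\mu}'}{\sigma^2}\right)\le q\cosh\!\left(\frac{\boldsymbol{x}^T\boldsymbol{\nu}'}{\sigma^2}\right),\\ 1,&\text{otherwise},\end{cases}$$ where $\boldsymbol{\mu}'=\begin{pmatrix}\boldsymbol{\mu}\\ \boldsymbol{\mu}\end{pmatrix}$ and $\boldsymbol{\nu}'=\begin{pmatrix}\boldsymbol{\mu}\\ -\boldsymbol{\mu}\end{pmatrix}$.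
   Context: CSBM: fix $n,d\in\mathbb{N}$, $\boldsymbol{\mu}\in\mathbb{R}^d$, $\sigma>0$, $p,q\in[0,1]$ with $p+q>0$. Draw $\epsilon_1,\dots,\epsilon_n$ i.i.d. Bernoulli$(1/2)$, classes $C_k=\{j:\epsilon_j=k\}$. Independently $\mathbf{X}_i\sim N((2\epsilon_i-1)\boldsymbol{\mu},\sigma^2\mathbf{I})$. Adjacency entries $a_{ij}\sim\mathrm{Ber}(p)$ if $i,j$ are in the same class and $\mathrm{Ber}(q)$ otherwise. For an edge $(i,j)$ of the graph (i.e. a pair conditioned on $a_{ij}=1$), the label is $y=1$ if $i,j$ are in the same class and $y=0$ otherwise, so $\Pr[y=1]=p/(p+q)$, $\Pr[y=0]=q/(p+q)$; given $y=1$, $\mathbf{X}'_{ij}\sim N(\pm\boldsymbol{\mu}',\sigma^2\mathbf{I})$ with each sign equally likely, and given $y=0$, $\mathbf{X}'_{ij}\sim N(\pm\boldsymbol{\nu}',\sigma^2\mathbf{I})$ with each sign equally likely. The Bayes optimal classifier is $\boldsymbol{x}\mapsto\arg\max_{c\in\{0,1\}}\Pr[y=c\mid \mathbf{X}'_{ij}=\boldsymbol{x}]$. *)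

(* Defs.v *)
From HB Require Import structures.
From mathcomp Require Import all_boot all_order all_algebra.
From mathcomp Require Import all_classical all_reals all_analysis.
Set Implicit Arguments. Unset Strict Implicit. Unset Printing Implicit Defensive.
Import Order.TTheory GRing.Theory Num.Theory.
Local Open Scope ring_scope.

Section CSBMEdge.
Variable R : realType.

Definition coshR (x : R) : R := (expR x + expR (- x)) / 2.

Definition dotv (k : nat) (x y : 'cV[R]_k) : R := \sum_(i < k) x i ord0 * y i ord0.

Definition gauss_pdf (k : nat) (sigma : R) (m x : 'cV[R]_k) : R :=
  ((2 * pi * sigma ^+ 2) `^ (k%:R / 2))^-1 *
  expR (- dotv (x - m) (x - m) / (2 * sigma ^+ 2)).

Definition mu' (d : nat) (mu : 'cV[R]_d) : 'cV[R]_(d + d) := col_mx mu mu.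
Definition nu' (d : nat) (mu : 'cV[R]_d) : 'cV[R]_(d + d) := col_mx mu (- mu).

(* Joint density of (y, X'_ij) for an edge (i,j) of the CSBM:
   Pr[y=1] = p/(p+q), X' | y=1 ~ 1/2 N(mu',s^2 I) + 1/2 N(-mu',s^2 I);
   Pr[y=0] = q/(p+q), X' | y=0 ~ 1/2 N(nu',s^2 I) + 1/2 N(-nu',s^2 I).
   Label y = 1 is encoded as true, y = 0 as false. *)
Definition edge_joint (d : nat) (p q sigma : R) (mu : 'cV[R]_d)
  (c : bool) (x : 'cV[R]_(d + d)) : R :=
  if c then p / (p + q) * (2^-1 * gauss_pdf sigma (mu' mu) x +
                           2^-1 * gauss_pdf sigma (- mu' mu) x)
  else q / (p + q) * (2^-1 * gauss_pdf sigma (nu' mu) x +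
                      2^-1 * gauss_pdf sigma (- nu' mu) x).

Definition edge_posterior (d : nat) (p q sigma : R) (mu : 'cV[R]_d)
  (c : bool) (x : 'cV[R]_(d + d)) : R :=
  edge_joint p q sigma mu c x /
  (edge_joint p q sigma mu false x + edge_joint p q sigma mu true x).

Definition bayes_optimal (d : nat) (p q sigma : R) (mu : 'cV[R]_d)
  (h : 'cV[R]_(d + d) -> bool) : Prop :=
  forall x c, edge_posterior p q sigma mu c x <= edge_posterior p q sigma mu (h x) x.

Definition h_star (d : nat) (p q sigma : R) (mu : 'cV[R]_d)
  (x : 'cV[R]_(d + d)) : bool :=
  if p * coshR (dotv x (mu' mu) / sigma ^+ 2) <= q * coshR (dotv x (nu' mu) / sigma ^+ 2)
  then false else true.

End CSBMEdge.

(* Main.v *)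
Require Import Defs.
From HB Require Import structures.
From mathcomp Require Import all_boot all_order all_algebra.
From mathcomp Require Import all_classical all_reals all_analysis.
From mathcomp Require Import ring lra.
Import Order.TTheory GRing.Theory Num.Theory.
Local Open Scope ring_scope.

Section S.
Variable R : realType.

Lemma dotv_sub k (x m : 'cV[R]_k) :
  dotv (x - m) (x - m) = dotv x x + dotv m m - 2 * dotv x m.
Proof.
rewrite /dotv mulr_sumr -big_split -sumrB /=; apply: eq_bigr => i _.
rewrite !mxE; ring.
Qed.

Lemma dotv_oppr k (x m : 'cV[R]_k) : dotv x (- m) = - dotv x m.
Proof. rewrite /dotv -sumrN; apply: eq_bigr => i _; rewrite !mxE; ring. Qed.

Lemma dotv_opp2 k (m : 'cV[R]_k) : dotv (- m) (- m) = dotv m m.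
Proof. rewrite /dotv; apply: eq_bigr => i _; rewrite !mxE; ring. Qed.

Lemma dotv_col d (a b a' b' : 'cV[R]_d) :
  dotv (col_mx a b) (col_mx a' b') = dotv a a' + dotv b b'.
Proof. by rewrite /dotv big_split_ord /=; congr (_ + _); apply: eq_bigr => i _;
  rewrite ?col_mxEu ?col_mxEd. Qed.

Lemma gauss_exp k (sigma : R) (m x : 'cV[R]_k) : 0 < sigma ->
  gauss_pdf sigma m x = ((2 * pi * sigma ^+ 2) `^ (k%:R / 2))^-1 *
    expR (- (dotv x x + dotv m m) / (2 * sigma ^+ 2)) * expR (dotv x m / sigma ^+ 2).
Proof.
move=> hs; rewrite /gauss_pdf -[RHS]mulrA -expRD dotv_sub; congr (_ * expR _).
have : sigma != 0 by rewrite gt_eqF.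
move=> hs0; field; by rewrite ?mulf_neq0 ?expf_neq0.
Qed.

Lemma mix k (sigma : R) (m x : 'cV[R]_k) : 0 < sigma ->
  2^-1 * gauss_pdf sigma m x + 2^-1 * gauss_pdf sigma (- m) x =
  ((2 * pi * sigma ^+ 2) `^ (k%:R / 2))^-1 *
    expR (- (dotv x x + dotv m m) / (2 * sigma ^+ 2)) * coshR (dotv x m / sigma ^+ 2).
Proof.
move=> hs; rewrite !gauss_exp // dotv_opp2 dotv_oppr /coshR !mulNr; set C := (_ `^ _)^-1; set E := expR (- _); set a := expR (_ / _); set b := expR (- _); field. all: by [].
Qed.

End S.

Theorem lemma8 (R : realType) (d : nat) (mu : 'cV[R]_d) (sigma p q : R)
  (hsigma : 0 < sigma) (hp0 : 0 <= p) (hp1 : p <= 1) (hq0 : 0 <= q) (hq1 : q <= 1)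
  (hpq : 0 < p + q) :
  bayes_optimal p q sigma mu (h_star p q sigma mu).
Proof.
move=> x c.
set K := ((2 * pi * sigma ^+ 2) `^ ((d + d)%:R / 2))^-1 *
    expR (- (dotv x x + dotv (mu' mu) (mu' mu)) / (2 * sigma ^+ 2)) / (p + q).
have hC : 0 < (2 * pi * sigma ^+ 2) `^ ((d + d)%:R / 2).
  by rewrite powR_gt0 // !mulr_gt0 ?pi_gt0 ?exprn_gt0.
have hK : 0 < K.
  rewrite /K divr_gt0 // mulr_gt0 ?expR_gt0 // invr_gt0 powR_gt0 //.
  by rewrite !mulr_gt0 ?pi_gt0 ?exprn_gt0.
have hnn : dotv (nu' mu) (nu' mu) = dotv (mu' mu) (mu' mu).
  by rewrite /nu' /mu' !dotv_col dotv_opp2.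
have jt : edge_joint p q sigma mu true x = K * (p * coshR (dotv x (mu' mu) / sigma ^+ 2)).
  rewrite /edge_joint mix // /K; field; by rewrite (gt_eqF hpq) (gt_eqF hC).
have jf : edge_joint p q sigma mu false x = K * (q * coshR (dotv x (nu' mu) / sigma ^+ 2)).
  rewrite /edge_joint mix // hnn /K; field; by rewrite (gt_eqF hpq) (gt_eqF hC).
have cosh_ge0 : forall y : R, 0 < coshR y.
  by move=> y; rewrite /coshR divr_gt0 // addr_gt0 ?expR_gt0.
have hden : 0 < edge_joint p q sigma mu false x + edge_joint p q sigma mu true x.
  rewrite jt jf -mulrDr mulr_gt0 //.
  have := cosh_ge0 (dotv x (mu' mu) / sigma ^+ 2).
  have := cosh_ge0 (dotv x (nu' mu) / sigma ^+ 2).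
  set a := coshR _; set b := coshR _ => ha hb; have h1 : 0 <= q * a by rewrite mulr_ge0 // ltW.
  have h2 : 0 <= p * b by rewrite mulr_ge0 // ltW.
  have [hp|hp] : 0 < p \/ 0 < q by lra.
  - by have := mulr_gt0 hp hb; lra.
  - by have := mulr_gt0 hp ha; lra.
rewrite /edge_posterior; apply: ler_wpM2r; first by rewrite invr_ge0 ltW.
rewrite /h_star; case: ifP => hle; case: c => //; rewrite ?lexx ?jt ?jf ler_pM2l //.
by apply/ltW; rewrite ltNge hle.
Qed.
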